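(* Run the algorithm Mark&Predict (described in the context) with cache size $k$, and consider one of its phases (the period from one unmarking of all pages to the next). Let $c$ be the number of new pages of this phase (distinct pages requested during the phase that were not in the cache at its start). Suppose that at the start of the phase the cache contains exactly $\eta_0$ pages whose most recent prediction is $0$ and which are incorrect (i.e., the page is not requested during this phase) and exactly $\eta_1$ pages whose most recent prediction is $1$ and which are incorrect (i.e., the page is requested during this phase). Then the expected number of page faults incurred by Mark&Predict during this phase is at most $c\,(H_{\eta_1+c}-H_c+1)+H_k\,\eta_0,$ where $H_m=\sum_{j=1}^m 1/j$ (and $H_0=0$).
   Context: Paging: there is a universe $U$ of pages and a cache holding at most $k$ pages, initially empty. Requests arrive online; if a requested page is not in the cache (a page fault), it must be loaded, evicting a cached page if the cache holds $k$ pages. Along with each request $r_i$ the algorithm receives a prediction bit $p_i\in\{0,1\}$. A page whose most recent prediction is $0$ (resp. $1$) is called a $0$-page (resp. $1$-page). Algorithm Mark&Predict: pages carry a mark. On request $r_i$: if $r_i$ is not in the cache and the cache is full, then (i) if all cached pages are marked, unmark all pages (start of a new phase); (ii) if there is an unmarked $1$-page in the cache, evict one chosen uniformly at random among unmarked $1$-pages, otherwise evict an unmarked $0$-page chosen uniformly at random; then load $r_i$. Finally (in all cases) mark $r_i$. The expectation is over the algorithm's random choices during the phase, given the cache content and predictions at the start of the phase. *)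

(* Defs.v *)
From mathcomp Require Import all_boot all_order all_algebra.
Set Implicit Arguments.
Unset Strict Implicit.
Unset Printing Implicit Defensive.
Import Order.TTheory GRing.Theory Num.Theory.
Local Open Scope ring_scope.

Definition harmonic (R : realFieldType) (m : nat) : R :=
  \sum_(1 <= j < m.+1) (j%:R)^-1.

Definition avg (R : realFieldType) (T : eqType) (f : T -> R) (s : seq T) : R :=
  (\sum_(q <- s) f q) / (size s)%:R.

(* Expected number of page faults of Mark&Predict with cache size k, starting
   from cache content [cache] (a duplicate-free list), set of marked pages
   [marked], current most-recent predictions [pr] (true = prediction 1), on the
   request sequence [reqs] (each request comes with its prediction bit).
   Random evictions are averaged uniformly, so this is exactly the expectation
   over the algorithm's random choices. *)
Fixpoint mp_exp_faults (R : realFieldType) (T : eqType) (k : nat)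
  (cache marked : seq T) (pr : T -> bool) (reqs : seq (T * bool)) : R :=
  match reqs with
  | [::] => 0
  | (r, b) :: rest =>
    let pr' := fun x => if x == r then b else pr x in
    if r \in cache then mp_exp_faults R k cache (r :: marked) pr' rest
    else if (size cache < k)%N then
      1 + mp_exp_faults R k (r :: cache) (r :: marked) pr' rest
    else
      let marked1 := if all (fun x => x \in marked) cache then [::] else marked in
      let unm := [seq x <- cache | x \notin marked1] in
      let U1 := [seq x <- unm | pr x] in
      let cand := if U1 != [::] then U1 else [seq x <- unm | ~~ pr x] in
      1 + avg (fun q => mp_exp_faults R k (r :: rem q cache) (r :: marked1) pr' rest)
              cand
  end.

(* Main.v *)
Require Import Defs.
From mathcomp Require Import all_boot all_order all_algebra.
From mathcomp Require Import zify ring lra.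
Import Order.TTheory GRing.Theory Num.Theory.
Set Implicit Arguments.
Unset Strict Implicit.
Unset Printing Implicit Defensive.


Section Gen.
Variable T : eqType.

Lemma count_split1 (p : pred T) s z : uniq s -> z \in s ->
  count p s = (count (fun y => p y && (y != z)) s + p z)%N.
Proof.
elim: s => //= a s IH /andP[an us]; rewrite in_cons => /orP[/eqP->|zs].
  rewrite eqxx andbF add0n.
  have -> : count (fun y => p y && (y != a)) s = count p s.
    apply: eq_in_count => y ys.
    have -> : y != a by apply: contraNneq an => <-.
    by rewrite andbT.
  by rewrite addnC.
have za : a != z by apply: contraNneq an => ->.
by rewrite (IH us zs) za andbT addnA.
Qed.

Lemma count_pt (p1 p2 : pred T) s z : uniq s -> z \in s ->
  (forall y, y != z -> p1 y = p2 y) ->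
  (count p1 s + p2 z = count p2 s + p1 z)%N.
Proof.
move=> us zs h; rewrite (count_split1 p1 us zs) (count_split1 p2 us zs).
have -> : count (fun y => p1 y && (y != z)) s = count (fun y => p2 y && (y != z)) s.
  by apply: eq_count => y; case: (eqVneq y z) => [->|/h ->]; rewrite ?andbF ?andbT.
lia.
Qed.

Lemma count_undup_cons (p : pred T) r l :
  count p (undup (r :: l)) = (p r + count (fun y => p y && (y != r)) (undup l))%N.
Proof.
rewrite /=; case: ifP => rl.
  have ru : r \in undup l by rewrite mem_undup.
  by rewrite (count_split1 p (undup_uniq l) ru) addnC.
rewrite /=; congr (_ + _)%N; apply: eq_in_count => y; rewrite mem_undup.
by case: (eqVneq y r) => [->|]; rewrite ?rl ?andbT.
Qed.

Lemma size_undup_eq (s1 s2 : seq T) : s1 =i s2 -> size (undup s1) = size (undup s2).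
Proof.
move=> e; apply: perm_size; apply: uniq_perm; rewrite ?undup_uniq //.
by move=> x; rewrite !mem_undup e.
Qed.

Lemma notin_take_index (q : T) s : q \notin take (index q s) s.
Proof.
apply/negP => h; have := index_ltn h; by rewrite ltnn.
Qed.

Lemma take_index_cons (q r : T) s : q != r ->
  take (index q (r :: s)) (r :: s) = r :: take (index q s) s.
Proof. by move=> qr; rewrite /= eq_sym (negbTE qr). Qed.

End Gen.

Local Open Scope ring_scope.

Section Harm.
Variable R : realFieldType.
Local Notation H := (harmonic R).

Lemma harmonicS m : H m.+1 = H m + (m.+1%:R)^-1.
Proof. by rewrite /harmonic big_nat_recr. Qed.

Lemma harmonic_add m n :
  H (m + n)%N = H m + \sum_(i < n) ((m + i + 1)%N%:R)^-1.
Proof.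
elim: n => [|n IH]; first by rewrite addn0 big_ord0 addr0.
by rewrite addnS harmonicS IH big_ord_recr /= -addrA addn1.
Qed.

Lemma harmonic_ge0 m : 0 <= H m.
Proof. by apply: sumr_ge0 => i _; rewrite invr_ge0. Qed.

Lemma harmonic_mono m n : (m <= n)%N -> H m <= H n.
Proof.
move=> /subnKC <-; rewrite harmonic_add lerDl; apply: sumr_ge0 => i _.
by rewrite invr_ge0.
Qed.

Lemma harmonic_ge1 m : (1 <= m)%N -> 1 <= H m.
Proof.
move=> m1; apply: le_trans (harmonic_mono m1).
by rewrite /harmonic big_nat1 invr1.
Qed.

Definition F1 (c b a : nat) : R :=
  \sum_(i < a) (minn c (b + i + 1))%:R / (b + i + 1)%N%:R.

Lemma F1_bound c a b :
  F1 c b a <= (c - b)%N%:R + c%:R * (H (c + a) - H c).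
Proof.
elim: a b => [|a IH] b.
  by rewrite /F1 big_ord0 addn0 subrr mulr0 addr0 ler0n.
case: (leqP c b) => cb.
  have -> : (c - b)%N = 0%N by apply/eqP; rewrite subn_eq0.
  rewrite add0r harmonic_add addrAC subrr add0r mulr_sumr /F1.
  apply: ler_sum => i _.
  have -> : minn c (b + i + 1) = c by apply/minn_idPl; lia.
  apply: ler_wpM2l; first exact: ler0n.
  rewrite lef_pV2 ?posrE ?ltr0n ?ler_nat; lia.
rewrite /F1 big_ord_recl /=.
have -> : minn c (b + 0 + 1) = (b + 0 + 1)%N by apply/minn_idPr; lia.
rewrite divff ?pnatr_eq0 ?addn1 //.
have -> : \sum_(i < a) (minn c (b + bump 0 i + 1))%:R / (b + bump 0 i + 1)%N%:R
   = F1 c b.+1 a.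
  by apply: eq_bigr => i _; rewrite /bump /= !addnS !addSn addn0.
apply: le_trans (lerD (lexx 1) (IH b.+1)) _.
have -> : (c - b)%N = (c - b.+1).+1 by lia.
rewrite -natr1.
have h : H (c + a) <= H (c + a.+1) by rewrite harmonic_mono // addnS.
have h0 : 0 <= c%:R :> R by exact: ler0n.
nra.
Qed.
Lemma final_arith (c a b d e k : nat) : (c <= b + e)%N -> (e + d <= k)%N ->
  c%:R + F1 c b a + (c - b)%N%:R * (H (e + d) - H e)
  <= c%:R * (H (a + c) - H c + 1) + H k * e%:R.
Proof.
move=> hc hk.
have f1 := F1_bound c a b.
rewrite [(c + a)%N]addnC in f1.
have hed : H (e + d) <= H k by exact: harmonic_mono.
have hee : H e <= H (e + d) by apply: harmonic_mono; lia.
have c0 : 0 <= c%:R :> R by exact: ler0n.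
have e0 : 0 <= e%:R :> R by exact: ler0n.
have he0 := harmonic_ge0 e.
suff : (c - b)%N%:R * (1 + H (e + d) - H e) <= H k * e%:R.
  move=> hx; move: f1 hx.
  set A := H (a + c); set X := (c - b)%N%:R; set Y := H (e + d).
  rewrite !(mulrDr, mulrBr, mulr1).
  lra.
case: (leqP c b) => cb.
  have -> : (c - b)%N = 0%N by apply/eqP; rewrite subn_eq0.
  by rewrite mul0r; apply: mulr_ge0 => //; exact: harmonic_ge0.
have e1 : (1 <= e)%N by lia.
have he1 := harmonic_ge1 e1.
have xe : (c - b)%N%:R <= e%:R :> R by rewrite ler_nat; lia.
have x0 : 0 <= (c - b)%N%:R :> R by exact: ler0n.
nra.
Qed.
End Harm.

Local Open Scope ring_scope.

Lemma count_undup_sub (T : eqType) (p : pred T) (s1 s2 : seq T) :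
  {subset s1 <= s2} -> (count p (undup s1) <= count p (undup s2))%N.
Proof.
move=> sub; rewrite -!size_filter; apply: uniq_leq_size.
  by rewrite filter_uniq // undup_uniq.
by move=> x; rewrite !mem_filter !mem_undup => /andP[-> /sub ->].
Qed.

Section PartB.
Variable R : realFieldType.
Variable T : eqType.
Variable C : seq T.
Variable pr0 : T -> bool.
Hypothesis HC : uniq C.
Local Notation H := (harmonic R).

Definition hh0 (pre : seq T) := count (fun y => y \notin C) (undup pre).
Definition u0f (b : bool) (pre : seq T) := count (fun y => (pr0 y == b) && (y \notin pre)) C.
Definition hc0 (b : bool) (pre : seq T) : nat :=
  let h := hh0 pre in let h1 := minn h (u0f true pre) in if b then h1 else (h - h1)%N.
Definition g (q : T) (pre : seq T) : R := (hc0 (pr0 q) pre)%:R / (u0f (pr0 q) pre)%:R.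
Definition Tsum (pre0 rs : seq T) : R :=
  \sum_(q <- C | (q \in rs) && (q \notin pre0)) g q (pre0 ++ take (index q rs) rs).

Lemma Tsum_cons pre0 r rs : Tsum pre0 (r :: rs) =
  (if (r \in C) && (r \notin pre0) then g r pre0 else 0) + Tsum (rcons pre0 r) rs.
Proof.
rewrite /Tsum !(big_mkcond (fun q => _ && _)).
have E : forall q, q != r ->
  (if (q \in r :: rs) && (q \notin pre0) then g q (pre0 ++ take (index q (r :: rs)) (r :: rs)) else 0)
  = (if (q \in rs) && (q \notin rcons pre0 r) then g q (rcons pre0 r ++ take (index q rs) rs) else 0).
  move=> q qr; rewrite in_cons mem_rcons in_cons (negbTE qr) /= take_index_cons //.
  by rewrite cat_rcons.
case rC: (r \in C); last first.
  rewrite andFb add0r; apply: eq_big_seq => q qC; apply: E.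
  by apply: contraNneq (negbT rC) => <-.
rewrite (bigD1_seq r rC HC) (bigD1_seq r rC HC).
have -> : index r (r :: rs) = 0%N by rewrite /= eqxx.
rewrite take0 cats0 mem_head mem_rcons mem_head /= andbF add0r.
congr (_ + _); apply: eq_bigr => q qr; exact: (E q qr).
Qed.

Definition cF (s : seq T) := count (fun y => y \notin C) (undup s).
Definition bF (s : seq T) := count (fun y => pr0 y && (y \notin s)) C.
Definition eF (s : seq T) := count (fun y => ~~ pr0 y && (y \notin s)) C.
Definition aF (pre0 rs : seq T) := count (fun y => [&& pr0 y, y \in rs & y \notin pre0]) C.
Definition dF (pre0 rs : seq T) := count (fun y => [&& ~~ pr0 y, y \in rs & y \notin pre0]) C.

Lemma F1_ge0 c b a : 0 <= F1 R c b a.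
Proof. by apply: sumr_ge0 => i _; apply: divr_ge0; apply: ler0n. Qed.

Lemma u1_split pre0 rs : u0f true pre0 = (aF pre0 rs + bF (pre0 ++ rs))%N.
Proof.
rewrite /u0f /aF /bF -count_predUI.
rewrite (@eq_count _ (predI _ _) pred0); last first.
  by move=> y /=; rewrite mem_cat; case: (y \in rs); case: (y \in pre0); case: (pr0 y).
rewrite count_pred0 addn0; apply: eq_count => y /=; rewrite mem_cat.
by case: (pr0 y); case: (y \in rs); case: (y \in pre0).
Qed.

Lemma u0_split pre0 rs : u0f false pre0 = (dF pre0 rs + eF (pre0 ++ rs))%N.
Proof.
rewrite /u0f /dF /eF -count_predUI.
rewrite (@eq_count _ (predI _ _) pred0); last first.
  by move=> y /=; rewrite mem_cat; case: (y \in rs); case: (y \in pre0); case: (pr0 y).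
rewrite count_pred0 addn0; apply: eq_count => y /=; rewrite mem_cat.
by case: (pr0 y); case: (y \in rs); case: (y \in pre0).
Qed.

Lemma Tsum_bound rs pre0 :
  Tsum pre0 rs <= F1 R (cF (pre0 ++ rs)) (bF (pre0 ++ rs)) (aF pre0 rs)
     + (cF (pre0 ++ rs) - bF (pre0 ++ rs))%N%:R
       * (H (eF (pre0 ++ rs) + dF pre0 rs) - H (eF (pre0 ++ rs))).
Proof.
elim: rs pre0 => [|r rs IH] pre0.
  rewrite /Tsum big_pred0; last by move=> q; rewrite in_nil.
  apply: addr_ge0; first exact: F1_ge0.
  apply: mulr_ge0; first exact: ler0n.
  by rewrite subr_ge0 harmonic_mono // leq_addr.
rewrite Tsum_cons.
have := IH (rcons pre0 r); rewrite cat_rcons.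
set c := cF _; set b := bF _; set e := eF _.
move=> IH'.
case: ifP => hr; last first.
  rewrite add0r.
  have -> : aF pre0 (r :: rs) = aF (rcons pre0 r) rs.
    apply: eq_in_count => y yC; rewrite in_cons mem_rcons in_cons.
    case: (eqVneq y r) => [eyr|]; last by [].
    by subst y; move: hr; rewrite yC /= => /negbFE ->; rewrite !andbF.
  have -> : dF pre0 (r :: rs) = dF (rcons pre0 r) rs.
    apply: eq_in_count => y yC; rewrite in_cons mem_rcons in_cons.
    case: (eqVneq y r) => [eyr|]; last by [].
    by subst y; move: hr; rewrite yC /= => /negbFE ->; rewrite !andbF.
  exact: IH'.
move/andP: hr => [rC rp].
have Ea : (aF pre0 (r :: rs) = aF (rcons pre0 r) rs + pr0 r)%N.
  have E1 : [&& pr0 r, r \in rs & r \notin rcons pre0 r] = false.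
    by rewrite mem_rcons mem_head !andbF.
  have E2 : [&& pr0 r, r \in r :: rs & r \notin pre0] = pr0 r.
    by rewrite mem_head rp !andbT.
  have := @count_pt _ (fun y => [&& pr0 y, y \in rs & y \notin rcons pre0 r])
    (fun y => [&& pr0 y, y \in r :: rs & y \notin pre0]) C r HC rC.
  rewrite /aF E1 E2 addn0 => -> //.
  by move=> y yr; rewrite in_cons mem_rcons in_cons (negbTE yr).
have Ed : (dF pre0 (r :: rs) = dF (rcons pre0 r) rs + ~~ pr0 r)%N.
  have E1 : [&& ~~ pr0 r, r \in rs & r \notin rcons pre0 r] = false.
    by rewrite mem_rcons mem_head !andbF.
  have E2 : [&& ~~ pr0 r, r \in r :: rs & r \notin pre0] = ~~ pr0 r.
    by rewrite mem_head rp !andbT.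
  have := @count_pt _ (fun y => [&& ~~ pr0 y, y \in rs & y \notin rcons pre0 r])
    (fun y => [&& ~~ pr0 y, y \in r :: rs & y \notin pre0]) C r HC rC.
  rewrite /dF E1 E2 addn0 => -> //.
  by move=> y yr; rewrite in_cons mem_rcons in_cons (negbTE yr).
have hc : (hh0 pre0 <= c)%N.
  by apply: count_undup_sub => y yp; rewrite mem_cat yp.
have U1 := u1_split pre0 (r :: rs).
have U0 := u0_split pre0 (r :: rs).
rewrite -/b -/e in U1 U0.
rewrite /g /hc0.
case pr: (pr0 r) Ea Ed => /= Ea Ed; rewrite ?addn0 ?addn1 in Ed Ea; rewrite Ed.
  rewrite Ea /F1 big_ord_recr /= -/(F1 R c b _).
  set a' := aF _ _ in IH' U1 Ea *.
  apply: le_trans (lerD (lexx _) IH') _.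
  rewrite addrA lerD2r addrC lerD2l.
  rewrite U1 Ea addn1.
  have -> : (a'.+1 + b)%N = (b + a').+1 by lia.
  apply: ler_wpM2r; first by rewrite invr_ge0 ler0n.
  rewrite ler_nat; lia.
set d' := dF _ _ in IH' U0 Ed *.
apply: le_trans (lerD (lexx _) IH') _.
rewrite Ea addrCA lerD2l.
rewrite addnS harmonicS.
have -> : (c - b)%N%:R * (H (e + d') + ((e + d').+1)%:R^-1 - H e) =
  (c - b)%N%:R * (H (e + d') - H e) + (c - b)%N%:R * ((e + d').+1)%:R^-1 :> R.
  by rewrite -mulrDr; congr (_ * _); rewrite addrAC.
rewrite addrC lerD2l U0 Ed.
have -> : (d'.+1 + e)%N = (e + d').+1 by lia.
apply: ler_wpM2r; first by rewrite invr_ge0 ler0n.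
rewrite ler_nat U1; lia.
Qed.

End PartB.

Local Open Scope ring_scope.

Section PartA.
Variable R : realFieldType.
Variable T : eqType.
Variable k : nat.
Variable C : seq T.
Variable pr0 : T -> bool.
Hypothesis HC : uniq C.

Definition cntM (marked cache : seq T) (b : bool) (pre : seq T) :=
  count (fun y => [&& y \notin marked, y \notin cache, pr0 y == b & y \notin pre]) C.
Definition cntP (marked cache : seq T) (b : bool) (pre : seq T) :=
  count (fun y => [&& y \in cache, y \notin marked, pr0 y == b & y \notin pre]) C.
Definition cntU (marked : seq T) (b : bool) (pre : seq T) :=
  count (fun y => [&& y \notin marked, pr0 y == b & y \notin pre]) C.
Definition hh (marked cache pre : seq T) :=
  (count (fun y => (y \notin marked) && (y \notin cache)) C +
   count (fun y => (y \notin C) && (y \notin cache)) (undup pre))%N.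
Definition hc (marked cache : seq T) (b : bool) (pre : seq T) : nat :=
  let h := hh marked cache pre in let h1 := minn h (cntU marked true pre) in
  if b then h1 else (h - h1)%N.
Definition wq (marked cache rs : seq T) (q : T) : R :=
  let pre := take (index q rs) rs in
  (hc marked cache (pr0 q) pre - cntM marked cache (pr0 q) pre)%N%:R
    / (cntP marked cache (pr0 q) pre)%:R.
Definition Phi (cache marked rs : seq T) : R :=
  (count (fun y => y \notin cache) (undup rs))%:R +
  \sum_(q <- C | [&& q \in cache, q \notin marked & q \in rs]) wq marked cache rs q.

Lemma wq_ge0 marked cache rs q : 0 <= wq marked cache rs q.
Proof. by apply: divr_ge0; apply: ler0n. Qed.

Lemma Phi_ge0 cache marked rs : 0 <= Phi cache marked rs.
Proof.
apply: addr_ge0; first exact: ler0n.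
by apply: sumr_ge0 => q _; exact: wq_ge0.
Qed.

Section NonFault.
Variables (cache marked : seq T) (r : T).
Hypothesis rc : r \in cache.

Lemma N_hh pre : hh (r :: marked) cache pre = hh marked cache (r :: pre).
Proof.
rewrite /hh count_undup_cons rc andbF add0n; congr (_ + _)%N.
  apply: eq_count => y; rewrite in_cons.
  by case: (eqVneq y r) => [->|]; rewrite ?rc ?andbF.
apply: eq_count => y /=.
by case: (eqVneq y r) => [->|]; rewrite ?rc ?andbF ?andbT.
Qed.

Lemma N_cntU b pre : cntU (r :: marked) b pre = cntU marked b (r :: pre).
Proof.
apply: eq_count => y; rewrite !in_cons.
by case: (y == r); case: (y \in marked); case: (pr0 y == b); case: (y \in pre).
Qed.

Lemma N_cntM b pre : cntM (r :: marked) cache b pre = cntM marked cache b (r :: pre).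
Proof.
apply: eq_count => y; rewrite !in_cons.
by case: (y == r); case: (y \in marked); case: (y \in cache); case: (pr0 y == b);
  case: (y \in pre).
Qed.

Lemma N_cntP b pre : cntP (r :: marked) cache b pre = cntP marked cache b (r :: pre).
Proof.
apply: eq_count => y; rewrite !in_cons.
by case: (y == r); case: (y \in marked); case: (y \in cache); case: (pr0 y == b);
  case: (y \in pre).
Qed.

Lemma N_wq rs q : q != r -> wq (r :: marked) cache rs q = wq marked cache (r :: rs) q.
Proof.
move=> qr; rewrite /wq take_index_cons // /hc N_hh N_cntU N_cntM N_cntP.
by [].
Qed.

Lemma N_Phi rs : Phi cache (r :: marked) rs <= Phi cache marked (r :: rs).
Proof.
rewrite /Phi count_undup_cons rc /= add0n.
have -> : count (fun y => (y \notin cache) && (y != r)) (undup rs) =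
          count (fun y => y \notin cache) (undup rs).
  by apply: eq_count => y; case: (eqVneq y r) => [->|]; rewrite ?rc ?andbT.
rewrite lerD2l !(big_mkcond (fun q => [&& _, _ & _])).
apply: ler_sum => q _; rewrite !in_cons.
case: (eqVneq q r) => [->|qr] /=; first by rewrite andbF; case: ifP => _ //; exact: wq_ge0.
by rewrite N_wq.
Qed.
End NonFault.

Lemma count_split2 (p c : pred T) s :
  count p s = (count (fun y => p y && c y) s + count (fun y => p y && ~~ c y) s)%N.
Proof. by elim: s => //= a s ->; case: (p a); case: (c a) => /=; lia. Qed.

Lemma sum_const_seq (s : seq T) (c : R) : \sum_(x <- s) c = (size s)%:R * c.
Proof.
elim: s => [|a s IH]; first by rewrite big_nil mul0r.
by rewrite big_cons IH /= -[(size s).+1]addn1 natrD mulrDl mul1r addrC.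
Qed.

Lemma sum_if_count (s : seq T) (P : pred T) (u : R) :
  \sum_(x <- s) (if P x then u else 0) = (count P s)%:R * u.
Proof.
elim: s => [|a s IH]; first by rewrite big_nil mul0r.
rewrite big_cons IH /= natrD mulrDl; case: (P a) => /=; first by rewrite mul1r.
by rewrite mul0r add0r.
Qed.

Lemma count_sub_uniq (p : pred T) (s1 s2 : seq T) : uniq s1 -> uniq s2 ->
  {subset s1 <= s2} -> count p s1 = count (fun y => (y \in s1) && p y) s2.
Proof.
move=> u1 u2 sub.
have pe : perm_eq s1 [seq y <- s2 | y \in s1].
  apply: uniq_perm => //; first exact: filter_uniq.
  by move=> y; rewrite mem_filter; case yi: (y \in s1) => //=; rewrite sub.
by rewrite (permP pe) count_filter; apply: eq_count => y /=; rewrite andbC.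
Qed.

Lemma per_q_arith (p B A : nat) (w : R) : w = A%:R / B%:R -> (1 <= B)%N -> (B <= p)%N ->
  (1 <= A)%N ->
  (p - B)%N%:R * w + (B - 1)%N%:R * ((A - 1)%N%:R / (B - 1)%N%:R) + 1 <= p%:R * w.
Proof.
move=> -> B1 Bp A1.
have B0 : B%:R != 0 :> R by rewrite pnatr_eq0 -lt0n.
rewrite natrB // [X in _ <= X](_ : _ = (p%:R - B%:R) * (A%:R / B%:R) + A%:R); last first.
  have e : B%:R * (A%:R / B%:R) = A%:R :> R by rewrite mulrC divfK.
  by rewrite mulrBl e subrK.
rewrite -addrA lerD2l.
case: (eqVneq B 1%N) => [->|B2].
  by rewrite subnn mul0r add0r ler1n.
have B1' : (B - 1)%N%:R != 0 :> R.
  by rewrite pnatr_eq0 subn_eq0 -ltnNge ltn_neqAle eq_sym B2.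
by rewrite mulrC divfK // natrB // subrK.
Qed.

Section Fault.
Variables (cache marked : seq T) (r x : T).
Hypotheses (uc : uniq cache) (rnc : r \notin cache) (xc : x \in cache)
  (xm : x \notin marked) (xC : x \in C) (msub : {subset marked <= cache}).

Lemma memc' y : (y \in r :: rem x cache) = (y == r) || ((y != x) && (y \in cache)).
Proof. by rewrite in_cons (mem_rem_uniq x uc) inE. Qed.

Lemma xr : x != r.
Proof. by apply: contraNneq rnc => <-. Qed.

Lemma rm : r \notin marked.
Proof. by apply: contra rnc; apply: msub. Qed.

Lemma L_hh pre : hh (r :: marked) (r :: rem x cache) pre = hh marked cache (r :: pre).
Proof.
rewrite /hh count_undup_cons.
set pm := fun y => [&& y \notin marked, y \notin cache & y != r].
have E1 : count (fun y => (y \notin r :: marked) && (y \notin r :: rem x cache)) C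
          = (count pm C + 1)%N.
  have Px : (x \notin r :: marked) && (x \notin r :: rem x cache) = true.
    by rewrite memc' !in_cons eqxx (negbTE xr) xm.
  have Pm : pm x = false by rewrite /pm xc !andbF.
  have := @count_pt _ pm (fun y => (y \notin r :: marked) && (y \notin r :: rem x cache))
     C x HC xC.
  rewrite Px Pm addn0 => -> //.
  move=> y yx; rewrite /pm memc' in_cons yx /=.
  by case: (y == r); case: (y \in marked); case: (y \in cache).
have E2 : count (fun y => (y \notin marked) && (y \notin cache)) C
          = (count pm C + (r \in C))%N.
  case rC: (r \in C).
    have := @count_pt _ pm (fun y => (y \notin marked) && (y \notin cache)) C r HC rC.
    have Pm : pm r = false by rewrite /pm eqxx !andbF.
    rewrite Pm rm rnc addn0 => <- //.
    by move=> y yr; rewrite /pm yr andbT.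
  rewrite addn0; apply: eq_in_count => y yC.
  have yr : y != r by apply: contraTneq yC => ->; rewrite rC.
  by rewrite /pm yr andbT.
have E3 : count (fun y => (y \notin C) && (y \notin r :: rem x cache)) (undup pre)
   = count (fun y => ((y \notin C) && (y \notin cache)) && (y != r)) (undup pre).
  apply: eq_count => y; rewrite memc'.
  case: (eqVneq y r) => [->|yr] /=; first by rewrite !andbF.
  case: (eqVneq y x) => [->|yx] /=; first by rewrite xC.
  by rewrite andbT.
rewrite E1 E2 E3 rnc andbT.
case: (r \in C) => /=; lia.
Qed.

Lemma L_cntM b pre : cntM (r :: marked) (r :: rem x cache) b pre
   = (cntM marked cache b (r :: pre) + ((pr0 x == b) && (x \notin pre)))%N.
Proof.
have Px : [&& x \notin r :: marked, x \notin r :: rem x cache, pr0 x == b & x \notin pre]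
   = (pr0 x == b) && (x \notin pre).
  by rewrite memc' !in_cons eqxx (negbTE xr) xm.
have Po : [&& x \notin marked, x \notin cache, pr0 x == b & x \notin r :: pre] = false.
  by rewrite xc /= andbF.
have := @count_pt _ (fun y => [&& y \notin marked, y \notin cache, pr0 y == b & y \notin r :: pre])
   (fun y => [&& y \notin r :: marked, y \notin r :: rem x cache, pr0 y == b & y \notin pre])
   C x HC xC.
rewrite Px Po addn0 /cntM => -> //.
move=> y yx; rewrite memc' !in_cons yx /=.
by case: (y == r); case: (y \in marked); case: (y \in cache); case: (pr0 y == b);
  case: (y \in pre).
Qed.

Lemma L_cntP b pre : (cntP (r :: marked) (r :: rem x cache) b pre
   + ((pr0 x == b) && (x \notin pre)) = cntP marked cache b (r :: pre))%N.
Proof.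
have Px : [&& x \in r :: rem x cache, x \notin r :: marked, pr0 x == b & x \notin pre]
   = false.
  by rewrite memc' (negbTE xr) eqxx.
have Po : [&& x \in cache, x \notin marked, pr0 x == b & x \notin r :: pre]
   = (pr0 x == b) && (x \notin pre).
  by rewrite xc xm in_cons (negbTE xr).
have := @count_pt _ 
   (fun y => [&& y \in r :: rem x cache, y \notin r :: marked, pr0 y == b & y \notin pre])
   (fun y => [&& y \in cache, y \notin marked, pr0 y == b & y \notin r :: pre])
   C x HC xC.
rewrite Px Po addn0 /cntP => -> //.
move=> y yx; rewrite memc' !in_cons yx /=.
by case: (y == r); case: (y \in marked); case: (y \in cache); case: (pr0 y == b);
  case: (y \in pre).
Qed.

Lemma L_wq rs q : q \in cache -> q != x ->
  wq (r :: marked) (r :: rem x cache) rs q =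
  if (pr0 x == pr0 q) && (x \notin take (index q rs) rs) then
    ((hc marked cache (pr0 q) (r :: take (index q rs) rs)
      - cntM marked cache (pr0 q) (r :: take (index q rs) rs)) - 1)%N%:R
    / ((cntP marked cache (pr0 q) (r :: take (index q rs) rs)) - 1)%N%:R
  else wq marked cache (r :: rs) q.
Proof.
move=> qc qx.
have qr : q != r by apply: contraNneq rnc => <-.
rewrite /wq take_index_cons //.
set pre := take (index q rs) rs.
have Eh : hc (r :: marked) (r :: rem x cache) (pr0 q) pre = hc marked cache (pr0 q) (r :: pre).
  by rewrite /hc L_hh N_cntU.
have EP := L_cntP (pr0 q) pre.
rewrite Eh L_cntM.
case: ifP => cnd; rewrite cnd in EP *.
  by rewrite addn1 subnS -EP addn1 subn1 /= ?subnS.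
by rewrite addn0; rewrite addn0 in EP; rewrite EP.
Qed.

Lemma K_pos pre b q : b = has pr0 [seq y <- cache | y \notin marked] ->
  (forall y, y \in cache -> y \notin marked -> y \in C) ->
  q \in cache -> q \notin marked -> pr0 q = b -> q \notin pre ->
  (cntM marked cache b (r :: pre) < hc marked cache b (r :: pre))%N.
Proof.
move=> hb I3 qc qm pq qp.
have qr : q != r by apply: contraNneq rnc => <-.
set pre1 := r :: pre.
set Mall := count (fun y => [&& y \notin marked, y \notin cache & y \notin pre1]) C.
have K1 : (Mall < hh marked cache pre1)%N.
  rewrite /hh count_undup_cons rnc andbT.
  have S1 : (Mall <= count (fun y => ((y \notin marked) && (y \notin cache)) && (y != r)) C)%N.
    apply: sub_count => y /and3P[-> -> ]; rewrite /pre1 in_cons.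
    by case: (y == r).
  have S2 := count_split2 (fun y => (y \notin marked) && (y \notin cache)) (fun y => y != r) C.
  case rC: (r \in C) => /=.
    have S3 := count_split1 (fun y => (y \notin marked) && (y \notin cache)) HC rC.
    rewrite rm rnc /= in S3.
    rewrite add0n; apply: (@leq_trans (count (fun y => (y \notin marked) && (y \notin cache)) C)); last exact: leq_addr.
    by rewrite S3 addn1 ltnS.
  apply: (@leq_trans (count (fun y => (y \notin marked) && (y \notin cache)) C).+1).
    by rewrite ltnS; apply: leq_trans S1 (sub_count _ _) => y /andP[].
  by rewrite addnCA add1n ltnS leq_addr.
have SU : forall b', cntU marked b' pre1 = (cntM marked cache b' pre1 + cntP marked cache b' pre1)%N.
  move=> b'; rewrite /cntU (count_split2 _ (fun y => y \in cache)) addnC.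
  congr (_ + _)%N; apply: eq_count => y /=;
  by case: (y \in cache); case: (y \in marked); case: (pr0 y == b'); case: (y \in pre1).
have SM : Mall = (cntM marked cache true pre1 + cntM marked cache false pre1)%N.
  rewrite /Mall (count_split2 _ pr0).
  congr (_ + _)%N; apply: eq_count => y /=;
  by case: (y \in cache); case: (y \in marked); case: (pr0 y); case: (y \in pre1).
have qp1 : q \notin pre1 by rewrite /pre1 in_cons (negbTE qr).
rewrite /hc; case: b hb pq => hb pq.
  have P1 : (0 < cntP marked cache true pre1)%N.
    rewrite -has_count; apply/hasP; exists q; first exact: I3.
    by rewrite qc qm pq qp1.
  rewrite leq_min; apply/andP; split.
    by apply: leq_ltn_trans K1; rewrite SM leq_addr.
  by rewrite SU -addn1 leq_add2l.
have P0 : cntP marked cache true pre1 = 0%N.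
  apply/eqP; rewrite -leqn0 leqNgt -has_count; apply/hasP => -[y yC /and4P[yc ym py _]].
  move/esym: hb => /negbT /hasPn /(_ y); rewrite mem_filter ym yc => /(_ isT).
  by rewrite (eqP py).
have e1 : minn (hh marked cache pre1) (cntU marked true pre1) = cntM marked cache true pre1.
  rewrite SU P0 addn0; apply/minn_idPr.
  by apply: leq_trans (ltnW K1); rewrite SM leq_addr.
rewrite /= e1 ltn_subRL -SM; exact: K1.
Qed.

End Fault.

Lemma fault_step (cache marked : seq T) (r : T) (rs : seq T) :
  uniq cache -> r \notin cache -> {subset marked <= cache} ->
  (forall y, y \in cache -> y \notin marked -> y \in C) ->
  \sum_(x <- [seq y <- [seq y <- cache | y \notin marked] |
        pr0 y == has pr0 [seq y <- cache | y \notin marked]])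
       Phi (r :: rem x cache) (r :: marked) rs
    <= (size [seq y <- [seq y <- cache | y \notin marked] |
        pr0 y == has pr0 [seq y <- cache | y \notin marked]])%:R
       * (Phi cache marked (r :: rs) - 1).
Proof.
move=> uc rnc msub I3.
set unm := [seq y <- cache | y \notin marked].
set cls := has pr0 unm.
set cand := [seq y <- unm | pr0 y == cls].
have memcand : forall y, (y \in cand) = [&& y \in cache, y \notin marked & pr0 y == cls].
  by move=> y; rewrite !mem_filter andbC andbA [(y \notin marked) && _]andbC.
have ucand : uniq cand by rewrite !filter_uniq.
have candC : {subset cand <= C}.
  by move=> y; rewrite memcand => /and3P[yc ym _]; apply: I3.
set Pq := fun q => [&& q \in cache, q \notin marked & q \in rs].
set n0 := count (fun y => (y \notin cache) && (y != r)) (undup rs).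
set w := fun q => wq marked cache (r :: rs) q.
set F := fun x q => if q != x then wq (r :: marked) (r :: rem x cache) rs q else 0.
have ES : Phi cache marked (r :: rs) = 1 + n0%:R + \sum_(q <- C | Pq q) w q.
  rewrite /Phi count_undup_cons rnc add1n -natr1 [_ + 1]addrC.
  congr (_ + _); apply: eq_bigl => q; rewrite /Pq in_cons.
  by case: (eqVneq q r) => [->|]; rewrite ?(negbTE rnc).
have ESx : forall x, x \in cand -> Phi (r :: rem x cache) (r :: marked) rs
   = n0%:R + (x \in rs)%:R + \sum_(q <- C | Pq q) F x q.
  move=> x; rewrite memcand => /and3P[xc xm _].
  have xC := I3 x xc xm.
  rewrite /Phi; congr (_ + _).
    rewrite -natrD; congr (_%:R).
    rewrite (count_split2 _ (fun y => y == x)) addnC; congr (_ + _)%N.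
      apply: eq_count => y /=; rewrite (memc' r x uc) ?in_cons.
      case: (eqVneq y r) => [->|yr] /=; first by rewrite !andbF.
      case: (eqVneq y x) => [->|yx] /=; first by rewrite xc.
      by rewrite andbT.
    have -> : ((x \in rs) : nat) = count_mem x (undup rs).
      by rewrite count_uniq_mem ?undup_uniq // mem_undup.
    apply: eq_count => y /=; case: (eqVneq y x) => [->|]; rewrite ?andbF //.
    by rewrite (memc' r x uc) ?in_cons eqxx (negbTE (xr rnc xc)).
  rewrite /F -big_mkcondr; apply: eq_bigl => q; rewrite /Pq (memc' r x uc) ?in_cons.
  case: (eqVneq q r) => [->|qr] /=; first by rewrite (negbTE rnc).
  by case: (q != x); case: (q \in cache); case: (q \in marked); case: (q \in rs).
have -> : \sum_(x <- cand) Phi (r :: rem x cache) (r :: marked) rs =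
  \sum_(x <- cand) (n0%:R + (x \in rs)%:R + \sum_(q <- C | Pq q) F x q).
  by apply: eq_big_seq => x /ESx.
rewrite !big_split /= sum_const_seq.
have -> : Phi cache marked (r :: rs) - 1 = n0%:R + \sum_(q <- C | Pq q) w q.
  by rewrite ES; ring.
rewrite mulrDr -addrA lerD2l.
have -> : \sum_(x <- cand) ((x \in rs)%:R : R) =
    \sum_(q <- C | Pq q) (if pr0 q == cls then 1 else 0).
  rewrite (eq_bigr (fun x => if x \in rs then 1 else 0)); last first.
    by move=> x _; case: (x \in rs).
  rewrite sum_if_count big_mkcond /=.
  rewrite (eq_bigr (fun q => if Pq q && (pr0 q == cls) then 1 else 0)); last first.
    by move=> q _; case: (Pq q).
  rewrite sum_if_count (count_sub_uniq _ ucand HC candC); congr (_%:R * _).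
  apply: eq_count => y; rewrite memcand /Pq.
  by case: (y \in cache); case: (y \in marked); case: (y \in rs); case: (pr0 y == cls).
rewrite (exchange_big _ cand C xpredT Pq) -big_split mulr_sumr /=.
apply: ler_sum => q /and3P[qc qm qrs].
have qr : q != r by apply: contraNneq rnc => <-.
set pre' := take (index q rs) rs.
have qp : q \notin pre' := notin_take_index q rs.
set A := (hc marked cache (pr0 q) (r :: pre') - cntM marked cache (pr0 q) (r :: pre'))%N.
set B := cntP marked cache (pr0 q) (r :: pre').
set W1 := ((A - 1)%N%:R / (B - 1)%N%:R : R).
have EF : forall x, x \in cand -> F x q =
    if q != x then (if (pr0 x == pr0 q) && (x \notin pre') then W1 else w q) else 0.
  move=> x; rewrite memcand => /and3P[xc xm _]; rewrite /F; case: ifP => // qx.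
  exact: (L_wq uc rnc xc xm (I3 x xc xm) msub rs qc qx).
have wqE : w q = A%:R / B%:R by rewrite /w /wq take_index_cons.
case: (eqVneq (pr0 q) cls) => pq; last first.
  rewrite add0r (eq_big_seq (fun _ => w q)) ?sum_const_seq //.
  move=> x xc; rewrite EF //; move: xc; rewrite memcand => /and3P[_ _ /eqP px].
  have -> : q != x by apply: contra_neq pq => ->.
  by rewrite px eq_sym (negbTE pq).
have qcand : q \in cand by rewrite memcand qc qm pq eqxx.
have EF2 : forall x, x \in cand -> F x q =
    (if (x != q) && (x \notin pre') then W1 else 0) + (if x \in pre' then w q else 0).
  move=> x xc; rewrite EF //; move: xc; rewrite memcand => /and3P[_ _ /eqP px].
  rewrite px pq eqxx /=.
  case: (eqVneq x q) => [->|xq]; first by rewrite (negbTE qp) addr0.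
  by case: (x \in pre') => /=; rewrite ?addr0 ?add0r.
rewrite (eq_big_seq _ EF2) big_split /= !sum_if_count.
have hB : count (fun x => x \notin pre') cand = B.
  rewrite (count_sub_uniq _ ucand HC candC) /B /cntP; apply: eq_count => y.
  rewrite memcand in_cons pq.
  case: (eqVneq y r) => [->|_]; first by rewrite (negbTE rnc).
  by case: (y \in cache); case: (y \in marked); case: (pr0 y == cls); case: (y \in pre').
have h1 : count (fun x => (x != q) && (x \notin pre')) cand = (B - 1)%N.
  rewrite -hB (count_split1 (fun x => x \notin pre') ucand qcand) qp addn1 subn1 /=.
  by apply: eq_count => y; rewrite andbC.
have h2 : count (fun x => x \in pre') cand = (size cand - B)%N.
  by rewrite -hB -(count_predC (fun x => x \in pre') cand) addnK.
have B1 : (1 <= B)%N by rewrite -hB -has_count; apply/hasP; exists q.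
have Bp : (B <= size cand)%N by rewrite -hB count_size.
have A1 : (1 <= A)%N.
  rewrite subn_gt0.
  exact: (K_pos rnc msub (q := q) (pre := pre') (b := pr0 q) pq I3 qc qm erefl qp).
have := per_q_arith wqE B1 Bp A1.
rewrite h1 h2 -/W1; lra.
Qed.

Definition Inv (cache marked : seq T) (pr : T -> bool) (rs : seq T) :=
  [/\ uniq cache, size cache = k, {subset marked <= cache},
     (forall y, y \in cache -> y \notin marked -> y \in C) &
     ((forall y, y \notin marked -> pr y = pr0 y) /\
     (size (undup (marked ++ rs)) <= k)%N)].

Lemma mainA rest : forall cache marked pr, Inv cache marked pr (map fst rest) ->
  mp_exp_faults R k cache marked pr rest <= Phi cache marked (map fst rest).
Proof.
elim: rest => [|[r b] rest IH] cache marked pr.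
  by move=> _; exact: Phi_ge0.
case=> uc sc msub I3 [I4 I6].
set pr' := fun x => if x == r then b else pr x.
have I6' : (size (undup ((r :: marked) ++ map fst rest)) <= k)%N.
  rewrite (@size_undup_eq _ _ (marked ++ r :: map fst rest)) //.
  by move=> y; rewrite /= !(in_cons, mem_cat); case: (y == r); case: (y \in marked).
have I4' : forall y, y \notin r :: marked -> pr' y = pr0 y.
  move=> y; rewrite in_cons negb_or => /andP[yr ym]; rewrite /pr' (negbTE yr).
  exact: I4.
rewrite /=.
case: ifP => rc.
  have HI : Inv cache (r :: marked) pr' (map fst rest).
    split=> //.
      by move=> y; rewrite in_cons => /orP[/eqP->|/msub].
    by move=> y yc; rewrite in_cons negb_or => /andP[_]; apply: I3.
  have h1 := IH _ _ _ HI.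
  have h2 := @N_Phi cache marked r rc (map fst rest).
  exact: le_trans h1 h2.
have rnc : r \notin cache by rewrite rc.
rewrite sc ltnn /=.
have hall : all (fun x => x \in marked) cache = false.
  apply/negbTE/negP => /allP hm.
  have : (size (r :: cache) <= size (undup (marked ++ r :: map fst rest)))%N.
    apply: uniq_leq_size; first by rewrite /= rnc uc.
    move=> y; rewrite in_cons mem_undup mem_cat in_cons.
    by case/orP=> [->|/hm ->]; rewrite ?orbT.
  by rewrite /= sc => h; have := leq_trans h I6; rewrite ltnn.
rewrite hall.
set unm := [seq y <- cache | y \notin marked].
have Funm : forall (f : bool -> bool), [seq x <- unm | f (pr x)] = [seq x <- unm | f (pr0 x)].
  move=> f; apply: eq_in_filter => y; rewrite mem_filter => /andP[ym _].
  by rewrite I4.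
rewrite (Funm id) (Funm negb).
set cand := [seq y <- unm | pr0 y == has pr0 unm].
have Ecand : (if [seq x <- unm | pr0 x] != [::] then [seq x <- unm | pr0 x]
              else [seq x <- unm | ~~ pr0 x]) = cand.
  rewrite /cand -has_filter; case: (has pr0 unm).
    by apply: eq_filter => y; case: (pr0 y).
  by apply: eq_filter => y; case: (pr0 y).
rewrite Ecand.
have memcand : forall y, y \in cand -> (y \in cache) && (y \notin marked).
  by move=> y; rewrite !mem_filter => /andP[_ /andP[-> ->]].
have pos : (0 < size cand)%N.
  move/negbT: hall => /allPn [y yc ym].
  have yu : y \in unm by rewrite mem_filter ym yc.
  rewrite -has_predT; apply/hasP.
  rewrite /cand; case h: (has pr0 unm).
    by case/hasP: h => z zu pz; exists z; rewrite // mem_filter zu pz.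
  exists y => //; rewrite mem_filter yu andbT.
  by case py: (pr0 y) => //; rewrite -h; apply/hasP; exists y.
have HIq : forall q, q \in cand -> Inv (r :: rem q cache) (r :: marked) pr' (map fst rest).
  move=> q /memcand /andP[qc qm].
  split=> //.
  - rewrite /= rem_uniq // andbT; apply: contra rnc; apply: mem_rem.
  - rewrite /= size_rem // prednK // -has_predT; apply/hasP; by exists q.
  - move=> y; rewrite in_cons => /orP[/eqP->|ym]; first exact: mem_head.
    rewrite (memc' r q uc) (msub _ ym) andbT.
    have -> : y != q by apply: contraNneq qm => <-.
    by rewrite orbT.
  - move=> y; rewrite (memc' r q uc) in_cons negb_or => /orP[/eqP->|/andP[_ yc]].
      by rewrite eqxx.
    by case/andP=> _ ym; apply: I3.
have h1 : \sum_(q <- cand) mp_exp_faults R k (r :: rem q cache) (r :: marked) pr' rest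
    <= \sum_(q <- cand) Phi (r :: rem q cache) (r :: marked) (map fst rest).
  by rewrite !big_seq; apply: ler_sum => q qc; apply: IH; apply: HIq.
have h2 := fault_step (map fst rest) uc rnc msub I3.
rewrite -/unm -/cand in h2.
rewrite /avg.
have p0 : 0 < (size cand)%:R :> R by rewrite ltr0n.
have h3 : (\sum_(q <- cand) mp_exp_faults R k (r :: rem q cache) (r :: marked) pr' rest)
   / (size cand)%:R <= Phi cache marked (r :: map fst rest) - 1.
  by rewrite ler_pdivrMr // mulrC; exact: le_trans h1 h2.
rewrite -/pr'; lra.
Qed.

End PartA.

Unset Implicit Arguments.
Local Open Scope ring_scope.

Lemma count_mem_swap {T : eqType} (s1 s2 : seq T) : uniq s1 -> uniq s2 ->
  count (fun y => y \in s2) s1 = count (fun y => y \in s1) s2.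
Proof.
move=> u1 u2; rewrite -!size_filter; apply: perm_size; apply: uniq_perm.
- exact: filter_uniq.
- exact: filter_uniq.
by move=> y; rewrite !mem_filter andbC.
Qed.

Lemma cs2 {T : eqType} (p c : pred T) s :
  count p s = (count (fun y => p y && c y) s + count (fun y => p y && ~~ c y) s)%N.
Proof. by elim: s => //= a s ->; case: (p a); case: (c a) => /=; lia. Qed.

Theorem lemma1 (R : realFieldType) (T : eqType) (k : nat)
  (C : seq T) (pr0 : T -> bool) (sigma : seq (T * bool)) (next : option T) :
  uniq C -> size C = k ->
  (exists r b rest, sigma = (r, b) :: rest /\ r \notin C) ->
  (size (undup (map fst sigma)) <= k)%N ->
  (forall p, next = Some p ->
     p \notin map fst sigma /\ size (undup (map fst sigma)) = k) ->
  let P := undup (map fst sigma) in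
  let c := count (fun x => x \notin C) P in
  let eta0 := count (fun x => ~~ pr0 x && (x \notin P)) C in
  let eta1 := count (fun x => pr0 x && (x \in P)) C in
  mp_exp_faults R k C [::] pr0 sigma
    <= c%:R * (harmonic R (eta1 + c) - harmonic R c + 1) + harmonic R k * eta0%:R.
Proof.
move=> HC sC _ hsz _; cbv zeta.
set rs := map fst sigma.
have Inv0 : Inv k C pr0 C [::] pr0 rs.
  by split=> //; split.
have hA := mainA R HC Inv0.
apply: le_trans hA _.
have EM : forall b pre, cntM C pr0 [::] C b pre = 0%N.
  move=> b pre; rewrite /cntM (eq_in_count (a2 := pred0)) ?count_pred0 //.
  by move=> y yC /=; rewrite yC.
have EP : forall b pre, cntP C pr0 [::] C b pre = u0f C pr0 b pre.
  by move=> b pre; apply: eq_in_count => y yC /=; rewrite yC.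
have EH : forall b pre, hc C pr0 [::] C b pre = hc0 C pr0 b pre.
  move=> b pre; rewrite /hc /hc0 /hh /hh0.
  have -> : count (fun y => (y \notin [::]) && (y \notin C)) C = 0%N.
    rewrite (eq_in_count (a2 := pred0)) ?count_pred0 //.
    by move=> y yC /=; rewrite yC.
  have -> : cntU C pr0 [::] true pre = u0f C pr0 true pre by [].
  by rewrite add0n (eq_count (a2 := fun y => y \notin C)) // => y /=; rewrite andbb.
have ET : \sum_(q <- C | [&& q \in C, q \notin [::] & q \in rs]) wq R C pr0 [::] C rs q
    = Tsum R C pr0 [::] rs.
  rewrite /Tsum big_seq_cond [RHS]big_seq_cond; apply: eq_big => q.
    by case: (q \in C); rewrite ?in_nil /= ?andbT.
  by move=> /andP[qC _]; rewrite /wq /g cat0s EM subn0 EP EH.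
rewrite /Phi ET.
have TB := Tsum_bound R pr0 HC rs [::].
rewrite !cat0s in TB.
have E1 : count (fun x => pr0 x && (x \in undup rs)) C = aF C pr0 [::] rs.
  by apply: eq_count => y; rewrite mem_undup in_nil andbT.
have E0 : count (fun x => ~~ pr0 x && (x \notin undup rs)) C = eF C pr0 rs.
  by apply: eq_count => y; rewrite mem_undup.
rewrite E1 E0.
set cc := count _ (undup rs).
have Ec : cc = cF C rs by [].
set a := aF C pr0 [::] rs.
set b := bF C pr0 rs.
set e := eF C pr0 rs.
set d := dF C pr0 [::] rs.
rewrite -Ec in TB.
have Hk : size C = (a + b + d + e)%N.
  rewrite -(count_predT C) (cs2 _ pr0) (cs2 (fun y => predT y && pr0 y) (fun y => y \in rs)).
  rewrite (cs2 (fun y => predT y && ~~ pr0 y) (fun y => y \in rs)).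
  rewrite /a /b /e /d /aF /bF /eF /dF.
  have q1 : forall f : T -> bool, count f C = count f C by [].
  rewrite (eq_count (a1 := fun y => predT y && pr0 y && (y \in rs))
                    (a2 := fun y => [&& pr0 y, y \in rs & y \notin [::]])); last first.
    by move=> y /=; rewrite ?in_nil ?andbT.
  rewrite (eq_count (a1 := fun y => predT y && ~~ pr0 y && (y \in rs))
                    (a2 := fun y => [&& ~~ pr0 y, y \in rs & y \notin [::]])); last first.
    by move=> y /=; rewrite ?in_nil ?andbT.
  rewrite (eq_count (a1 := fun y => predT y && pr0 y && (y \notin rs))
                    (a2 := fun y => pr0 y && (y \notin rs))) //.
  rewrite (eq_count (a1 := fun y => predT y && ~~ pr0 y && (y \notin rs))
                    (a2 := fun y => ~~ pr0 y && (y \notin rs))) //.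
  lia.
have Hs : (cc + a + d <= k)%N.
  apply: leq_trans hsz.
  rewrite -(count_predC (fun y => y \notin C)) /cc -addnA leq_add2l.
  rewrite (eq_count (a1 := predC (fun y => y \notin C)) (a2 := fun y => y \in C)); last first.
    by move=> y /=; rewrite negbK.
  rewrite (count_mem_swap (undup rs) C (undup_uniq rs) HC).
  rewrite (cs2 _ pr0) /a /d /aF /dF.
  rewrite (eq_count (a1 := fun y => (y \in undup rs) && pr0 y)
                    (a2 := fun y => [&& pr0 y, y \in rs & y \notin [::]])); last first.
    by move=> y /=; rewrite ?in_nil mem_undup ?andbT andbC.
  rewrite (eq_count (a1 := fun y => (y \in undup rs) && ~~ pr0 y)
                    (a2 := fun y => [&& ~~ pr0 y, y \in rs & y \notin [::]])) //.
  by move=> y /=; rewrite ?in_nil mem_undup ?andbT andbC.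
have hcb : (cc <= b + e)%N by lia.
have hed : (e + d <= k)%N by lia.
have FA := final_arith R a hcb hed.
apply: le_trans FA.
rewrite -addrA lerD2l.
exact: TB.
Qed.
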